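(* Let $\mathcal{X},\mathcal{Y}$ be disjoint finite sets of Boolean variables, $alive\notin\mathcal{X}\cup\mathcal{Y}$ a fresh variable, $\psi_A$ an LTL formula over $\mathcal{X}\cup\mathcal{Y}$, $\phi$ an LTLf formula over $\mathcal{X}\cup\mathcal{Y}$, and $\psi=t(\phi)\wedge alive\wedge(alive\ U\ (G\neg alive))$. Then $\phi$ is realizable with respect to $\langle\mathcal{X},\mathcal{Y}\rangle$ under assumption $\psi_A$ if and only if the LTL formula $\psi_A\rightarrow\psi$ is realizable with respect to $\langle\mathcal{X},\mathcal{Y}\cup\{alive\}\rangle$.
   Context: LTLf formulas: $\phi ::= a \mid \neg\phi \mid \phi_1\wedge\phi_2 \mid X\phi \mid \phi_1 U\phi_2$ with the finite-trace semantics: $\rho,i\models X\phi$ iff $i+1<|\rho|$ and $\rho,i+1\models\phi$; $\rho,i\models\phi_1U\phi_2$ iff there is $j$ with $i\le j<|\rho|$, $\rho,j\models\phi_2$ and $\rho,k\models\phi_1$ for $i\le k<j$; atoms and Boolean connectives as usual; $\rho\models\phi$ iff $\rho,0\models\phi$. LTL: same syntax plus $F,G$, standard semantics over infinite traces. Translation $t$: $t(a)=a$; $t(\neg\phi_1)=\neg t(\phi_1)$; $t(\phi_1\wedge\phi_2)=t(\phi_1)\wedge t(\phi_2)$; $t(X\phi)=X(alive\wedge t(\phi))$; $t(\phi_1U\phi_2)=t(\phi_1)\,U\,(alive\wedge t(\phi_2))$. Realizability under assumption: $\phi$ is realizable with respect to $\langle\mathcal{X},\mathcal{Y}\rangle$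 under assumption $\psi_A$ if there is $g:(2^{\mathcal{X}})^+\to 2^{\mathcal{Y}}$ such that for every $\lambda=X_0,X_1,\ldots\in(2^{\mathcal{X}})^\omega$, if the infinite trace $\rho=(X_0\cup g(X_0)),(X_1\cup g(X_0,X_1)),\ldots$ satisfies $\psi_A$, then there is $k\ge0$ with $\phi$ true in the finite prefix $(X_0\cup g(X_0)),\ldots,(X_k\cup g(X_0,\ldots,X_k))$. LTL realizability: an LTL formula $\Psi$ over $\mathcal{X}\cup\mathcal{Y}'$ ($\mathcal{X},\mathcal{Y}'$ disjoint) is realizable with respect to $\langle\mathcal{X},\mathcal{Y}'\rangle$ if there is $f:(2^{\mathcal{X}})^+\to 2^{\mathcal{Y}'}$ such that for every $\lambda=X_0,X_1,\ldots\in(2^{\mathcal{X}})^\omega$, $\Psi$ holds on the infinite trace $(X_0\cup f(X_0)),(X_1\cup f(X_0,X_1)),(X_2\cup f(X_0,X_1,X_2)),\ldots$. *)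

(* Defs.v *)
From mathcomp Require Import all_boot.
Set Implicit Arguments. Unset Strict Implicit. Unset Printing Implicit Defensive.

Section Logic.
Variable V : finType.

Inductive ltlf : Type :=
| FAtom of V | FNot of ltlf | FAnd of ltlf & ltlf | FNext of ltlf | FUntil of ltlf & ltlf.

Inductive ltl : Type :=
| LAtom of V | LNot of ltl | LAnd of ltl & ltl | LNext of ltl | LUntil of ltl & ltl
| LF of ltl | LG of ltl.

Definition LImp (p q : ltl) : ltl := LNot (LAnd p (LNot q)).

Fixpoint ltlf_atoms (p : ltlf) : seq V :=
  match p with
  | FAtom a => [:: a]
  | FNot p1 | FNext p1 => ltlf_atoms p1
  | FAnd p1 p2 | FUntil p1 p2 => ltlf_atoms p1 ++ ltlf_atoms p2
  end.

Fixpoint ltl_atoms (p : ltl) : seq V :=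
  match p with
  | LAtom a => [:: a]
  | LNot p1 | LNext p1 | LF p1 | LG p1 => ltl_atoms p1
  | LAnd p1 p2 | LUntil p1 p2 => ltl_atoms p1 ++ ltl_atoms p2
  end.

(* finite-trace semantics: rho, i |= p (only meaningful for i < size rho) *)
Fixpoint ltlf_sat (rho : seq {set V}) (i : nat) (p : ltlf) : Prop :=
  match p with
  | FAtom a => a \in nth set0 rho i
  | FNot p1 => ~ ltlf_sat rho i p1
  | FAnd p1 p2 => ltlf_sat rho i p1 /\ ltlf_sat rho i p2
  | FNext p1 => i.+1 < size rho /\ ltlf_sat rho i.+1 p1
  | FUntil p1 p2 => exists j, [/\ i <= j, j < size rho, ltlf_sat rho j p2 &
                       forall k, i <= k -> k < j -> ltlf_sat rho k p1]
  end.

Definition ltlf_models (rho : seq {set V}) (p : ltlf) : Prop := ltlf_sat rho 0 p.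

Fixpoint ltl_sat (rho : nat -> {set V}) (i : nat) (p : ltl) : Prop :=
  match p with
  | LAtom a => a \in rho i
  | LNot p1 => ~ ltl_sat rho i p1
  | LAnd p1 p2 => ltl_sat rho i p1 /\ ltl_sat rho i p2
  | LNext p1 => ltl_sat rho i.+1 p1
  | LUntil p1 p2 => exists j, [/\ i <= j, ltl_sat rho j p2 &
                       forall k, i <= k -> k < j -> ltl_sat rho k p1]
  | LF p1 => exists j, i <= j /\ ltl_sat rho j p1
  | LG p1 => forall j, i <= j -> ltl_sat rho j p1
  end.

Definition ltl_models (rho : nat -> {set V}) (p : ltl) : Prop := ltl_sat rho 0 p.

Fixpoint transl (alive : V) (p : ltlf) : ltl :=
  match p with
  | FAtom a => LAtom a
  | FNot p1 => LNot (transl alive p1)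
  | FAnd p1 p2 => LAnd (transl alive p1) (transl alive p2)
  | FNext p1 => LNext (LAnd (LAtom alive) (transl alive p1))
  | FUntil p1 p2 => LUntil (transl alive p1) (LAnd (LAtom alive) (transl alive p2))
  end.

Definition psi_of (alive : V) (phi : ltlf) : ltl :=
  LAnd (transl alive phi)
       (LAnd (LAtom alive) (LUntil (LAtom alive) (LG (LNot (LAtom alive))))).

(* A strategy is a function on histories
   (nonempty sequences of input letters; it is only ever applied to them). *)
Definition play (g : seq {set V} -> {set V}) (lam : nat -> {set V}) : nat -> {set V} :=
  fun i => lam i :|: g (mkseq lam i.+1).

Definition realizable_under (X Y : {set V}) (psiA : ltl) (phi : ltlf) : Prop :=
  exists g : seq {set V} -> {set V},
    (forall h, g h \subset Y) /\
    forall lam : nat -> {set V}, (forall i, lam i \subset X) ->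
      ltl_models (play g lam) psiA ->
      exists k, ltlf_models (mkseq (play g lam) k.+1) phi.

Definition ltl_realizable (X Y' : {set V}) (Psi : ltl) : Prop :=
  exists f : seq {set V} -> {set V},
    (forall h, f h \subset Y') /\
    forall lam : nat -> {set V}, (forall i, lam i \subset X) ->
      ltl_models (play f lam) Psi.

End Logic.

(* Main.v *)
Require Import Defs.
From mathcomp Require Import all_boot.
From Stdlib Require Import Classical ClassicalEpsilon Setoid.

Lemma ltl_agree (V : finType) (q : ltl V) (r1 r2 : nat -> {set V}) :
  (forall i a, a \in ltl_atoms q -> (a \in r1 i) = (a \in r2 i)) ->
  forall i, ltl_sat r1 i q <-> ltl_sat r2 i q.
Proof.
elim: q => [a|q IH|q1 IH1 q2 IH2|q IH|q1 IH1 q2 IH2|q IH|q IH] H /=.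
- by move=> i; rewrite H // inE.
- by move=> i; rewrite (IH H).
- have H1 : forall i a, a \in ltl_atoms q1 -> (a \in r1 i) = (a \in r2 i).
    by move=> j a Ha; apply: H; rewrite mem_cat Ha.
  have H2 : forall i a, a \in ltl_atoms q2 -> (a \in r1 i) = (a \in r2 i).
    by move=> j a Ha; apply: H; rewrite mem_cat Ha orbT.
  by move=> i; rewrite (IH1 H1) (IH2 H2).
- by move=> i; rewrite (IH H).
- have H1 : forall i a, a \in ltl_atoms q1 -> (a \in r1 i) = (a \in r2 i).
    by move=> j a Ha; apply: H; rewrite mem_cat Ha.
  have H2 : forall i a, a \in ltl_atoms q2 -> (a \in r1 i) = (a \in r2 i).
    by move=> j a Ha; apply: H; rewrite mem_cat Ha orbT.
  move: (IH1 H1) (IH2 H2) => E1 E2 i.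
  by split=> -[j [Hij Hj Hk]]; exists j; split=> //;
    [apply/E2 | move=> k Ha Hb; apply/E1; exact: Hk | apply/E2 | move=> k Ha Hb; apply/E1; exact: Hk].
- move: (IH H) => E i; by split=> -[j [Hj Hs]]; exists j; split=> //; apply/E.
- move: (IH H) => E i; by split=> Hs j Hj; apply/E; apply: Hs.
Qed.

Lemma ltlf_agree (V : finType) (p : ltlf V) (r1 r2 : nat -> {set V}) n :
  (forall i a, a \in ltlf_atoms p -> (a \in r1 i) = (a \in r2 i)) ->
  forall i, ltlf_sat (mkseq r1 n) i p <-> ltlf_sat (mkseq r2 n) i p.
Proof.
elim: p => [a|q IH|q1 IH1 q2 IH2|q IH|q1 IH1 q2 IH2] H /=.
- move=> i; case: (ltnP i n) => Hi.
    by rewrite !nth_mkseq // H // inE.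
  by rewrite !nth_default ?size_mkseq.
- by move=> i; rewrite (IH H).
- have H1 : forall i a, a \in ltlf_atoms q1 -> (a \in r1 i) = (a \in r2 i).
    by move=> j a Ha; apply: H; rewrite mem_cat Ha.
  have H2 : forall i a, a \in ltlf_atoms q2 -> (a \in r1 i) = (a \in r2 i).
    by move=> j a Ha; apply: H; rewrite mem_cat Ha orbT.
  by move=> i; rewrite (IH1 H1) (IH2 H2).
- by move=> i; rewrite (IH H) !size_mkseq.
- have H1 : forall i a, a \in ltlf_atoms q1 -> (a \in r1 i) = (a \in r2 i).
    by move=> j a Ha; apply: H; rewrite mem_cat Ha.
  have H2 : forall i a, a \in ltlf_atoms q2 -> (a \in r1 i) = (a \in r2 i).
    by move=> j a Ha; apply: H; rewrite mem_cat Ha orbT.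
  move: (IH1 H1) (IH2 H2) => E1 E2 i; rewrite !size_mkseq.
  by split=> -[j [Hij Hjn Hj Hk]]; exists j; split=> //;
    [apply/E2 | move=> k Ha Hb; apply/E1; exact: Hk | apply/E2 | move=> k Ha Hb; apply/E1; exact: Hk].
Qed.

Lemma transl_ok (V : finType) (alive : V) (p : ltlf V) (rho : nat -> {set V}) n :
  (forall i, (alive \in rho i) = (i < n)) ->
  forall i, i < n -> (ltl_sat rho i (transl alive p) <-> ltlf_sat (mkseq rho n) i p).
Proof.
move=> Hal; elim: p => [a|q IH|q1 IH1 q2 IH2|q IH|q1 IH1 q2 IH2] i Hi /=.
- by rewrite nth_mkseq.
- by rewrite (IH i Hi).
- by rewrite (IH1 i Hi) (IH2 i Hi).
- rewrite Hal size_mkseq; split=> -[H1 H2]; split => //.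
    by apply/(IH _ H1).
  by apply/(IH _ H1).
- rewrite size_mkseq; split.
  + move=> [j [Hij [Haj Hj] Hk]].
    have Hjn : j < n by rewrite -Hal.
    exists j; split => //; first by apply/(IH2 _ Hjn).
    move=> k Hik Hkj; apply/(IH1 _ (ltn_trans Hkj Hjn)); exact: Hk.
  + move=> [j [Hij Hjn Hj Hk]].
    exists j; split => //; first by split; [rewrite Hal | apply/(IH2 _ Hjn)].
    move=> k Hik Hkj; apply/(IH1 _ (ltn_trans Hkj Hjn)); exact: Hk.
Qed.

Lemma tail_ok (V : finType) (alive : V) (rho : nat -> {set V}) :
  (exists n, 0 < n /\ forall i, (alive \in rho i) = (i < n)) <->
  ltl_sat rho 0 (LAnd (LAtom alive) (LUntil (LAtom alive) (LG (LNot (LAtom alive))))).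
Proof.
split.
- move=> [n [Hn H]] /=; split; first by rewrite H.
  exists n; split => //.
    by move=> j Hj; rewrite H ltnNge Hj.
  by move=> k _ Hk; rewrite H.
- move=> /= [H0 [j [_ Hj Hk]]].
  exists j; split.
    case: j Hj {Hk} => // Hj; by have := Hj 0 (leqnn 0).
  move=> i; case: (ltnP i j) => Hij.
    by rewrite Hk.
  by apply/negP; apply: Hj.
Qed.

Lemma min_ex (P : nat -> Prop) : (exists k, P k) -> exists k, P k /\ forall m, m < k -> ~ P m.
Proof.
move=> [k Hk]; elim: k {-2}k (leqnn k) Hk => [|n IH] k Hkn Hk.
  exists k; split => // m Hm; move: Hkn; rewrite leqn0 => /eqP E; by rewrite E in Hm.
case: (classic (exists m, m < k /\ P m)) => [[m [Hm Pm]]|Hno].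
  apply: (IH m) => //; rewrite -ltnS; exact: leq_trans Hm Hkn.
exists k; split => // m Hm Pm; apply: Hno; by exists m.
Qed.

Lemma take_mkseq (T : Type) (f : nat -> T) m n : m <= n -> take m (mkseq f n) = mkseq f m.
Proof.
move=> Hmn; have x0 : T := f 0.
have Hs : size (take m (mkseq f n)) = m by rewrite size_takel // size_mkseq.
apply: (@eq_from_nth _ x0); first by rewrite Hs size_mkseq.
move=> i; rewrite Hs => Him.
by rewrite nth_take // !nth_mkseq // (leq_trans Him Hmn).
Qed.

Lemma eq_in_mkseq (T : Type) (f1 f2 : nat -> T) n :
  (forall m, m < n -> f1 m = f2 m) -> mkseq f1 n = mkseq f2 n.
Proof.
move=> H; rewrite /mkseq; apply/eq_in_map => m; rewrite mem_iota add0n => /andP [_ Hm].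
exact: H.
Qed.

Theorem mainTheorem10 (V : finType) (X Y : {set V}) (alive : V)
  (psiA : ltl V) (phi : ltlf V) :
  [disjoint X & Y] ->
  alive \notin X :|: Y ->
  {subset ltl_atoms psiA <= X :|: Y} ->
  {subset ltlf_atoms phi <= X :|: Y} ->
  (realizable_under X Y psiA phi <->
   ltl_realizable X (alive |: Y) (LImp psiA (psi_of alive phi))).
Proof.
move=> _ Hal HA Hphi.
have Hne : forall a, a \in X :|: Y -> a != alive.
  by move=> a Ha; apply/eqP => E; move: Hal; rewrite -E Ha.
have HaX : alive \notin X by apply: contra Hal; rewrite inE => ->.
have HaY : alive \notin Y by apply: contra Hal; rewrite inE => ->; rewrite orbT.
split.
- move=> [g [Hg Hgood]].
  pose pp (h : seq {set V}) m := nth set0 h m :|: g (take m.+1 h).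
  pose stopped (h : seq {set V}) :=
    exists k, k.+1 < size h /\ ltlf_models (mkseq (pp h) k.+1) phi.
  pose f h := g h :|: (if excluded_middle_informative (stopped h) then set0 else [set alive]).
  exists f; split.
    move=> h; rewrite /f; apply/subsetP => a; rewrite !inE.
    case/orP => [Ha|]; first by rewrite (subsetP (Hg h)) // orbT.
    by case: ifP => _; rewrite ?inE // => H; rewrite H.
  move=> lam Hlam.
  have agree : forall i a, a != alive -> (a \in play f lam i) = (a \in play g lam i).
    move=> i a Ha; rewrite /play /f !inE.
    by case: ifP => _; rewrite ?inE ?(negbTE Ha) ?orbF.
  have ppE : forall i m, m <= i -> pp (mkseq lam i.+1) m = play g lam m.
    move=> i m Hm; rewrite /pp /play nth_mkseq // take_mkseq //.
  have stopE : forall i, stopped (mkseq lam i.+1) <->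
      exists k, k < i /\ ltlf_models (mkseq (play g lam) k.+1) phi.
    move=> i; rewrite /stopped size_mkseq.
    have E : forall k, k < i -> mkseq (pp (mkseq lam i.+1)) k.+1 = mkseq (play g lam) k.+1.
      move=> k Hk; apply: eq_in_mkseq => m Hm; apply: ppE; rewrite ltnS in Hm.
      exact: leq_trans Hm (ltnW Hk).
    by split => -[k [Hk Hm]]; exists k; split => //; rewrite ?E // -?E.
  have aliveE : forall i, alive \in play f lam i <->
      ~ exists k, k < i /\ ltlf_models (mkseq (play g lam) k.+1) phi.
    move=> i; rewrite /play /f !inE.
    have -> : (alive \in lam i) = false by apply/negbTE; apply: contra HaX; apply/subsetP.
    have -> : (alive \in g (mkseq lam i.+1)) = false by apply/negbTE; apply: contra HaY; apply/subsetP.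
    rewrite /=; destruct (excluded_middle_informative (stopped (mkseq lam i.+1))) as [S|S]; rewrite /= ?inE ?eqxx.
      by split => // H; exfalso; apply: H; apply/stopE.
    by split => // _ H; apply: S; apply/stopE.
  rewrite /ltl_models /LImp /= => -[HpA Hnot]; apply: Hnot.
  have HpAg : ltl_sat (play g lam) 0 psiA.
    apply/(@ltl_agree _ _ _ (play f lam)) => // i a Ha.
    by rewrite agree // Hne // HA.
  have [k [Hk Hmin]] := @min_ex (fun k => ltlf_models (mkseq (play g lam) k.+1) phi) (Hgood lam Hlam HpAg).
  have marker : forall i, (alive \in play f lam i) = (i < k.+1).
    move=> i; case: (ltnP i k.+1) => Hi.
      apply/(aliveE i) => -[k' [Hk' Hp]]; apply: (Hmin k') => //.
      exact: leq_trans Hk' Hi.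
    by apply/negP => /(aliveE i); apply; exists k.
  split.
    apply/(@transl_ok _ alive phi _ _ marker 0 (ltn0Sn k)).
    apply/(@ltlf_agree _ _ _ (play g lam)) => // i a Ha.
    by rewrite agree // Hne // Hphi.
  by apply/tail_ok; exists k.+1.
- move=> [f [Hf Hgood]].
  pose g h := f h :\ alive.
  exists g; split.
    move=> h; apply/subsetP => a; rewrite !inE => /andP [Ha /(subsetP (Hf h))].
    by rewrite !inE (negbTE Ha).
  move=> lam Hlam HpA.
  have agree : forall i a, a != alive -> (a \in play g lam i) = (a \in play f lam i).
    by move=> i a Ha; rewrite /play /g !inE Ha.
  have := Hgood lam Hlam; rewrite /ltl_models /LImp /= => H.
  have psiH : ltl_sat (play f lam) 0 (psi_of alive phi).
    apply: NNPP => Hn; apply: H; split => //.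
    apply/(@ltl_agree _ _ _ (play g lam)) => // i a Ha.
    by rewrite agree // Hne // HA.
  move: psiH => [Ht Htail].
  have [n [Hn marker]] := (@tail_ok _ alive (play f lam)).2 Htail.
  exists n.-1; rewrite prednK //.
  apply/(@ltlf_agree _ _ _ (play f lam)).
    by move=> i a Ha; rewrite agree // Hne // Hphi.
  exact/(@transl_ok _ alive phi _ _ marker 0 Hn).
Qed.
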